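(* Let $d,b,n$ be positive integers and $R_0(t)=\prod_{-n\le l\le n}(t-dl)$. For a polynomial $q$ put $p(t)=q(t)/R_0(t)$ and $p_k=(p(t)(t-dk))|_{t=dk}$ for $-n\le k\le n$. Then in each of the following cases $\deg q\le 2n$, every $p_k$ is an integer, and $|p_k|\le C$: (i) $q(t)=d^{2n}\prod_{(d+2(i-1))n<l\le(d+2i)n}(t-l)$ with $1\le i\le b$, and $C=\frac{1}{(n!)^2}\prod_{(2d+2(i-1))n<l\le(2d+2i)n}l$; (ii) $q(t)=d^{2n}\prod_{(d+2(i-1))n<l\le(d+2i)n}(t+l)$ with $1\le i\le b$, and the same $C$ as in (i); (iii) $q(t)=d^{2n}(2n)!$ and $C=\frac{(2n)!}{(n!)^2}$.
   Context: All products are over integers $l$ in the indicated ranges. *)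

(* Defs.v *)
From HB Require Import structures.
From mathcomp Require Import all_boot all_order all_algebra.
Set Implicit Arguments. Unset Strict Implicit. Unset Printing Implicit Defensive.
Import Order.TTheory GRing.Theory Num.Theory.
Local Open Scope ring_scope.

(* The nodes d*l for -n <= l <= n, indexed by j in [0, 2n], l = j - n. *)
Definition node (d n j : nat) : rat := ((d%:Z * (j%:Z - n%:Z))%R)%:~R.

Definition R0 (d n : nat) : {poly rat} :=
  \prod_(0 <= j < (2 * n).+1) ('X - (node d n j)%:P).

(* p_k = (q(t)/R_0(t) * (t - dk))|_{t = dk}
       = q(dk) / prod_{-n<=l<=n, l<>k} (dk - dl), for -n <= k <= n. *)
Definition pk (d n : nat) (q : {poly rat}) (k : int) : rat :=
  q.[(d%:Z * k)%:~R] /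
  \prod_(0 <= j < (2 * n).+1 | (j%:Z - n%:Z)%R != k)
     ((d%:Z * k)%:~R - node d n j).

Definition q1 (d n i : nat) : {poly rat} :=
  (d%:R ^+ (2 * n))%:P *
  \prod_(((d + 2 * (i - 1)) * n).+1 <= l < ((d + 2 * i) * n).+1) ('X - (l%:R)%:P).

Definition q2 (d n i : nat) : {poly rat} :=
  (d%:R ^+ (2 * n))%:P *
  \prod_(((d + 2 * (i - 1)) * n).+1 <= l < ((d + 2 * i) * n).+1) ('X + (l%:R)%:P).

Definition q3 (d n : nat) : {poly rat} := ((d%:R ^+ (2 * n)) * ((2 * n)`!)%:R)%:P.

Definition C12 (d n i : nat) : rat :=
  (\prod_(((2 * d + 2 * (i - 1)) * n).+1 <= l < ((2 * d + 2 * i) * n).+1) (l%:R : rat))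
  / ((n`!)%:R ^+ 2).

Definition C3 (n : nat) : rat := ((2 * n)`!)%:R / ((n`!)%:R ^+ 2).

Definition good (d n : nat) (q : {poly rat}) (C : rat) : Prop :=
  (size q <= (2 * n).+1)%N /\
  forall k : int, (- n%:Z <= k <= n%:Z)%R ->
    (exists z : int, pk d n q k = z%:~R) /\ `|pk d n q k| <= C.

(* Main.v *)
Require Import Defs.
From HB Require Import structures.
From mathcomp Require Import all_boot all_order all_algebra.
Import Order.TTheory GRing.Theory Num.Theory.

Lemma prod_consec s r : (\prod_(s.+1 <= l < (s + r).+1) l = 'C(s + r, r) * r`!)%N.
Proof.
have h := fact_split (leq_addr r s).
have h2 := bin_fact (leq_addl s r).
rewrite addnK in h2.
apply/eqP; rewrite -(@eqn_pmul2l (s`!)) ?fact_gt0 //.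
by rewrite -h -h2 [X in _ == X]mulnC mulnA.
Qed.

Lemma prod_shift a b r (F : nat -> nat) :
  (forall j, j < r -> F (a + j) = b + j)%N ->
  (\prod_(a <= l < a + r) F l = \prod_(b <= l < b + r) l)%N.
Proof.
elim: r => [|r IH] H; first by rewrite !addn0 !big_geq.
rewrite !addnS !big_nat_recr ?leq_addr //= IH; last by move=> j hj; apply: H; exact: ltnW.
by rewrite H.
Qed.

Lemma bin_up N m : (2 * m < N -> 'C(N, m) <= 'C(N, m.+1))%N.
Proof.
move=> h.
rewrite -(leq_pmul2l (ltn0Sn m)) mul_bin_left leq_mul2r; apply/orP; right.
by rewrite ltn_subRL addnn -mul2n.
Qed.

Lemma bin_central n m : (m <= 2 * n -> 'C(2 * n, m) <= 'C(2 * n, n))%N.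
Proof.
have low : forall j m, (m + j = n -> 'C(2 * n, m) <= 'C(2 * n, n))%N.
  elim=> [|j IH] m0; first by rewrite addn0 => ->.
  move=> e; apply: leq_trans (IH m0.+1 _); last by rewrite addSn -addnS.
  apply: bin_up; rewrite -e ltn_mul2l /=; rewrite addnS ltnS leq_addr //.
move=> hm; case: (leqP m n) => hmn.
  by apply: (low (n - m)); rewrite subnKC.
rewrite -bin_sub //; apply: (low (m - n)).
rewrite addnBA ?subnK // ?mul2n -?addnn ?addnK //; exact: ltnW.
Qed.

Lemma prod_split N m (F : nat -> nat) : (m <= N ->
  \prod_(0 <= j < N.+1 | j != m) F j = (\prod_(0 <= j < m) F j) * \prod_(m.+1 <= j < N.+1) F j)%N.
Proof.
move=> hm.
rewrite [LHS](@big_cat_nat _ _ _ m 0 N.+1) //=; last exact: ltnW.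
rewrite [X in _ * X = _]big_ltn_cond ?ltnS // eqxx /=.
congr (_ * _).
  rewrite big_nat_cond [RHS]big_nat_cond; apply: eq_bigl => j.
  by case: (ltnP j m) => h; rewrite ?andbT ?andbF // neq_ltn h.
rewrite big_nat_cond [RHS]big_nat_cond; apply: eq_bigl => j.
by case: (ltnP m j) => h; rewrite ?andbT ?andbF //= ?(gtn_eqF h) ?andbT // ?ltnNge h ?andbF.
Qed.

Lemma den_nat d N m : (m <= N ->
  \prod_(0 <= j < N.+1 | j != m) (d * absz (Posz m - Posz j)%R) = d ^ N * (m`! * (N - m)`!))%N.
Proof.
move=> hm.
have P1 : (\prod_(0 <= j < m) absz (Posz m - Posz j)%R = m`!)%N.
  rewrite big_nat_rev add0n fact_prod big_add1 /=.
  apply: eq_big_nat => j /andP[_ hj].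
  by rewrite distnEl ?leq_subr // subKn.
have P2 : (\prod_(m.+1 <= j < N.+1) absz (Posz m - Posz j)%R = (N - m)`!)%N.
  rewrite fact_prod -{1}(subnKC hm) -addSn -add1n.
  apply: prod_shift => j hj.
  rewrite distnEr ?addSn ?leq_addr //; last by apply: leqW; rewrite leq_addr.
  by rewrite -addnS addKn !add0n.
rewrite (@prod_split N m (fun j => d * absz (Posz m - Posz j)%R) hm) !big_split /= !prod_nat_const_nat subn0 P1 P2 subSS.
by rewrite mulnACA -expnD subnKC.
Qed.

Local Open Scope ring_scope.
Lemma pk_gen d n (q : {poly rat}) m (Nz : int) c (C : rat) :
  (0 < d)%N -> (m <= 2 * n)%N ->
  q.[(d%:Z * (m%:Z - n%:Z))%:~R] = Nz%:~R ->
  `|Nz|%N = (d ^ (2 * n) * (m`! * (2 * n - m)`!) * c)%N ->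
  c%:R <= C ->
  (exists z : int, pk d n q (m%:Z - n%:Z) = z%:~R) /\ `|pk d n q (m%:Z - n%:Z)| <= C.
Proof.
move=> hd hm hq hN hc.
set Dz : int := \prod_(0 <= j < (2 * n).+1 | j != m) (d%:Z * (m%:Z - j%:Z)).
have hD : \prod_(0 <= j < (2 * n).+1 | (j%:Z - n%:Z) != (m%:Z - n%:Z))
     ((d%:Z * (m%:Z - n%:Z))%:~R - node d n j) = Dz%:~R :> rat.
  rewrite /Dz rmorph_prod.
  rewrite (eq_bigl (fun j : nat => j != m)); last by move=> j; rewrite /= (inj_eq (addIr _)) eqz_nat.
  apply: eq_bigr => j _; rewrite /node -intrB -mulrBr opprB addrA subrK //.
have hDa : `|Dz|%N = (d ^ (2 * n) * (m`! * (2 * n - m)`!))%N.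
  rewrite /Dz (@big_morph nat int absz 1%N muln 1 *%R abszM (erefl _)) -den_nat //.
  by apply: eq_bigr => j _; rewrite abszM.
have hK : (0 < d ^ (2 * n) * (m`! * (2 * n - m)`!))%N.
  by rewrite !muln_gt0 expn_gt0 hd !fact_gt0.
have Dz0 : Dz != 0.
  by rewrite -absz_eq0 hDa -lt0n.
have hdv : (Dz %| Nz)%Z.
  by rewrite dvdzE hDa hN dvdn_mulr.
set z := (Nz %/ Dz)%Z.
have hz : Nz = z * Dz by rewrite divzK.
have hp : pk d n q (m%:Z - n%:Z) = z%:~R.
  rewrite /pk hq hD hz intrM mulfK // intr_eq0 //.
have hzc : `|z|%N = c.
  have := hN; rewrite hz abszM hDa mulnC => /eqP.
  by rewrite eqn_pmul2l // => /eqP.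
split; first by exists z.
by rewrite hp -intr_norm -abszE hzc.
Qed.

Lemma k_repr n (k : int) : (- n%:Z <= k <= n%:Z)%R ->
  exists2 m, (m <= 2 * n)%N & k = (m%:Z - n%:Z)%R.
Proof.
case/andP=> h1 h2.
have h0 : (0 <= k + n%:Z)%R by rewrite -[n%:Z]opprK subr_ge0.
have e : ((absz (k + n%:Z))%:Z = k + n%:Z)%R by rewrite abszE ger0_norm.
exists (absz (k + n%:Z)).
  by rewrite -lez_nat e mul2n -addnn PoszD lerD2r.
by rewrite e addrK.
Qed.

Lemma arr d n m s : (m <= 2 * n ->
  d ^ (2 * n) * ('C(s + 2 * n, 2 * n) * (2 * n)`!) =
  d ^ (2 * n) * (m`! * (2 * n - m)`!) * ('C(s + 2 * n, 2 * n) * 'C(2 * n, m)))%N.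
Proof.
move=> hm; rewrite -(bin_fact hm).
rewrite -!mulnA; congr (_ * _).
by rewrite [LHS]mulnA [RHS]mulnA [RHS]mulnC.
Qed.

Lemma Cbound n s B m : (s <= B)%N -> (m <= 2 * n)%N ->
  (('C(s + 2 * n, 2 * n) * 'C(2 * n, m))%N%:R : rat) <=
  (\prod_(B.+1 <= l < (B + 2 * n).+1) (l%:R : rat)) / ((n`!)%:R ^+ 2).
Proof.
move=> hs hm.
rewrite -natr_prod prod_consec.
have hf : (2 * n)`! = ('C(2 * n, n) * (n`! * n`!))%N.
  have e : (2 * n - n = n)%N by rewrite mul2n -addnn addnK.
  have hn2 : (n <= 2 * n)%N by rewrite mul2n -addnn leq_addr.
  by have := bin_fact hn2; rewrite e => ->.
rewrite hf mulnA expr2 (natrM rat (_ * _)%N (n`! * n`!)%N) (natrM rat n`! n`!) mulfK; last by rewrite mulf_neq0 // pnatr_eq0 -lt0n fact_gt0.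
rewrite ler_nat leq_mul // ?leq_bin2l ?leq_add2r // bin_central //.
Qed.

Lemma size_q (c : rat) a b (F : nat -> rat) :
  (size (c%:P * \prod_(a <= l < b) ('X - (F l)%:P))%R <= (b - a).+1)%N.
Proof.
rewrite mul_polyC; apply: leq_trans (size_scale_leq _ _) _.
by rewrite size_prod_XsubC size_iota.
Qed.

Lemma case1 d n i m : (0 < d)%N -> (m <= 2 * n)%N ->
  let A := ((d + 2 * i) * n)%N in let B := ((2 * d + 2 * i) * n)%N in
  let Q := (d%:R ^+ (2 * n))%:P *
     \prod_(A.+1 <= l < (A + 2 * n).+1) ('X - (l%:R)%:P) in
  (exists z : int, pk d n Q (m%:Z - n%:Z) = z%:~R) /\
  `|pk d n Q (m%:Z - n%:Z)| <=
    (\prod_(B.+1 <= l < (B + 2 * n).+1) (l%:R : rat)) / ((n`!)%:R ^+ 2).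
Proof.
move=> hd hm A B Q.
have hnA : (d * n <= A)%N by rewrite /A mulnDl leq_addr.
have hdm : (d * m <= d * n + d * n)%N by rewrite -mulnDr leq_mul2l addnn -mul2n hm orbT.
have hle : (d * m <= A + d * n)%N by rewrite (leq_trans hdm) // leq_add2r.
set s := (A + d * n - d * m)%N.
have hsB : (s <= B)%N.
  apply: (leq_trans (leq_subr (d * m) (A + d * n))).
  rewrite /B /A -mulnDl leq_mul2r; apply/orP; right.
  by rewrite addnAC [(2 * d)%N]mul2n -addnn.
have hprod : (\prod_(A.+1 <= l < (A + 2 * n).+1) (l + d * n - d * m) =
              'C(s + 2 * n, 2 * n) * (2 * n)`!)%N.
  rewrite -addSn (@prod_shift A.+1 s.+1 (2 * n)) ?addSn ?prod_consec // => j hj.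
  have e : (A.+1 + j + d * n = (A + d * n) + j.+1)%N by rewrite addSn addnS addnAC.
  by rewrite e -addnBAC // addnS addSn.
apply: (@pk_gen d n Q m ((d%:Z) ^+ (2 * n) *
   \prod_(A.+1 <= l < (A + 2 * n).+1) (d%:Z * (m%:Z - n%:Z) - l%:Z))
   ('C(s + 2 * n, 2 * n) * 'C(2 * n, m))%N) => //.
- rewrite /Q hornerM hornerC horner_prod [RHS]intrM [in RHS]rmorphXn [in RHS]rmorph_prod /=.
  congr (_ * _); apply: eq_bigr => l _.
  by rewrite hornerXsubC intrB.
- rewrite abszM abszX (@big_morph nat int absz 1%N muln 1 *%R abszM (erefl _)) /=.
  rewrite -arr // -hprod; congr (_ * _)%N.
  apply: eq_big_nat => l /andP[hl _].
  have hl' : (d * m <= l + d * n)%N.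
    by rewrite (leq_trans hdm) // leq_add2r (leq_trans hnA) // ltnW.
  have -> : d%:Z * (m%:Z - n%:Z) - l%:Z = - ((l + d * n - d * m)%N)%:Z.
    rewrite -subzn // PoszD !PoszM opprB mulrBr opprD addrA addrAC //.
  by rewrite abszN absz_nat.
- exact: Cbound.
Qed.

Lemma case2 d n i m : (0 < d)%N -> (m <= 2 * n)%N ->
  let A := ((d + 2 * i) * n)%N in let B := ((2 * d + 2 * i) * n)%N in
  let Q := (d%:R ^+ (2 * n))%:P *
     \prod_(A.+1 <= l < (A + 2 * n).+1) ('X + (l%:R)%:P) in
  (exists z : int, pk d n Q (m%:Z - n%:Z) = z%:~R) /\
  `|pk d n Q (m%:Z - n%:Z)| <=
    (\prod_(B.+1 <= l < (B + 2 * n).+1) (l%:R : rat)) / ((n`!)%:R ^+ 2).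
Proof.
move=> hd hm A B Q.
have hnA : (d * n <= A)%N by rewrite /A mulnDl leq_addr.
have hdm : (d * m <= d * n + d * n)%N by rewrite -mulnDr leq_mul2l addnn -mul2n hm orbT.
have hle : (d * n <= A + d * m)%N by rewrite (leq_trans hnA) // leq_addr.
set s := (A + d * m - d * n)%N.
have hsB : (s <= B)%N.
  apply: (@leq_trans (A + d * n)).
    by rewrite leq_subLR addnCA leq_add2l.
  rewrite /B /A -mulnDl leq_mul2r; apply/orP; right.
  by rewrite addnAC [(2 * d)%N]mul2n -addnn.
have hprod : (\prod_(A.+1 <= l < (A + 2 * n).+1) (l + d * m - d * n) =
              'C(s + 2 * n, 2 * n) * (2 * n)`!)%N.
  rewrite -addSn (@prod_shift A.+1 s.+1 (2 * n)) ?addSn ?prod_consec // => j hj.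
  have e : (A.+1 + j + d * m = (A + d * m) + j.+1)%N by rewrite addSn addnS addnAC.
  by rewrite e -addnBAC // addnS addSn.
apply: (@pk_gen d n Q m ((d%:Z) ^+ (2 * n) *
   \prod_(A.+1 <= l < (A + 2 * n).+1) (d%:Z * (m%:Z - n%:Z) + l%:Z))
   ('C(s + 2 * n, 2 * n) * 'C(2 * n, m))%N) => //.
- rewrite /Q hornerM hornerC horner_prod [RHS]intrM [in RHS]rmorphXn [in RHS]rmorph_prod /=.
  congr (_ * _); apply: eq_bigr => l _.
  by rewrite hornerD hornerX hornerC intrD.
- rewrite abszM abszX (@big_morph nat int absz 1%N muln 1 *%R abszM (erefl _)) /=.
  rewrite -arr // -hprod; congr (_ * _)%N.
  apply: eq_big_nat => l /andP[hl _].
  have hl' : (d * n <= l + d * m)%N.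
    by rewrite (leq_trans hnA) // (leq_trans (ltnW hl)) // leq_addr.
  have -> : d%:Z * (m%:Z - n%:Z) + l%:Z = ((l + d * m - d * n)%N)%:Z.
    by rewrite -subzn // PoszD !PoszM mulrBr addrAC; congr (_ - _); rewrite addrC.
  by rewrite absz_nat.
- exact: Cbound.
Qed.

Lemma case3 d n m : (0 < d)%N -> (m <= 2 * n)%N ->
  (exists z : int, pk d n (q3 d n) (m%:Z - n%:Z) = z%:~R) /\
  `|pk d n (q3 d n) (m%:Z - n%:Z)| <= C3 n.
Proof.
move=> hd hm.
apply: (@pk_gen d n (q3 d n) m ((d ^ (2 * n) * (2 * n)`!)%N)%:Z 'C(2 * n, m)) => //.
- rewrite /q3 hornerC; change (d%:R ^+ (2 * n) * (2 * n)`!%:R = ((d ^ (2 * n) * (2 * n)`!)%N)%:R :> rat).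
  by rewrite natrM natrX.
- by rewrite absz_nat -(bin_fact hm) [RHS]mulnAC mulnA.
- have hf : (2 * n)`! = ('C(2 * n, n) * (n`! * n`!))%N.
    have e : (2 * n - n = n)%N by rewrite mul2n -addnn addnK.
    have hn2 : (n <= 2 * n)%N by rewrite mul2n -addnn leq_addr.
    by have := bin_fact hn2; rewrite e => ->.
  rewrite /C3 hf expr2 natrM (natrM rat n`! n`!) mulfK; last by rewrite mulf_neq0 // pnatr_eq0 -lt0n fact_gt0.
  by rewrite ler_nat bin_central.
Qed.

Theorem lemma3p2 (d b n : nat) (hd : (0 < d)%N) (hb : (0 < b)%N) (hn : (0 < n)%N) :
  (forall i : nat, (1 <= i <= b)%N ->
     good d n (q1 d n i) (C12 d n i) /\ good d n (q2 d n i) (C12 d n i)) /\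
  good d n (q3 d n) (C3 n).
Proof.
split.
  move=> i /andP[hi _]; case: i hi => [//|i] _.
  have e1 : (i.+1 - 1 = i)%N by rewrite subn1.
  have e2 : forall x, ((x + 2 * i.+1) * n = (x + 2 * i) * n + 2 * n)%N.
    by move=> x; rewrite mulnS [(2 + _)%N]addnC addnA mulnDl.
  rewrite /q1 /q2 /C12 e1 !e2.
  split; split.
  - by apply: leq_trans (size_q _ _ _ _) _; rewrite -addSn addKn.
  - by move=> k /k_repr [m hm ->]; apply: case1.
  - have -> : \prod_(((d + 2 * i) * n).+1 <= l < ((d + 2 * i) * n + 2 * n).+1)
        ('X + (l%:R)%:P) =
        \prod_(((d + 2 * i) * n).+1 <= l < ((d + 2 * i) * n + 2 * n).+1)
        ('X - ((- l%:R : rat))%:P).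
      by apply: eq_bigr => l _; rewrite polyCN opprK.
    by apply: leq_trans (size_q _ _ _ _) _; rewrite -addSn addKn.
  - by move=> k /k_repr [m hm ->]; apply: case2.
split.
  by rewrite /q3 (leq_trans (size_polyC_leq1 _)).
by move=> k /k_repr [m hm ->]; apply: case3.
Qed.
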